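(* Let $G$ be a graph on a Polish space $X$. Then $\mu(G)\leq\aleph_0$ implies $\lambda(G)\leq\aleph_0$, which in turn implies $\chi(G)\leq\aleph_0$.
   Context: A graph $G$ on $X$ is a symmetric irreflexive relation. A $G$-anticlique is a set with no two distinct $G$-connected points. The chromatic number $\chi(G)$ is the smallest cardinality of a collection of $G$-anticliques covering $X$. An orientation of $G$ is an antisymmetric relation $o$ whose symmetrization equals $G$; the $o$-outflow of $x$ is $\{y\colon\langle x,y\rangle\in o\}$. The coloring number $\mu(G)$ is the smallest cardinal $\kappa$ such that there is an orientation of $G$ in which the outflow of every vertex has size $<\kappa$ (so $\mu(G)\leq\aleph_0$ means there is an orientation with all outflows finite). A set $A\subset X$ is $G$-loose if for every $x\in X$ there is an open neighborhood $O$ of $x$ containing no elements of $A$ that are $G$-connected to $x$; the loose number $\lambda(G)$ is the smallest cardinality of a collection of $G$-loose sets covering $X$. *)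

(* Defs.v *)
From HB Require Import structures.
From mathcomp Require Import all_boot all_order all_algebra.
From mathcomp Require Import all_classical all_reals all_analysis.
Set Implicit Arguments. Unset Strict Implicit. Unset Printing Implicit Defensive.
Local Open Scope classical_set_scope.

Definition is_graph (X : Type) (G : X -> X -> Prop) : Prop :=
  (forall x y, G x y -> G y x) /\ (forall x, ~ G x x).

(* A Polish space, presented as a complete (pseudo)metric space which is
   Hausdorff (so the pseudometric is a metric) and separable. *)
Definition polish (R : realType) (X : completePseudoMetricType R) : Prop :=
  hausdorff_space X /\ exists D : set X, countable D /\ dense D.

Definition anticlique (X : Type) (G : X -> X -> Prop) (A : set X) : Prop :=
  forall x y, A x -> A y -> x <> y -> ~ G x y.

Definition orientation (X : Type) (G o : X -> X -> Prop) : Prop :=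
  (forall x y, o x y -> o y x -> x = y) /\
  (forall x y, G x y <-> (o x y \/ o y x)).

Definition outflow (X : Type) (o : X -> X -> Prop) (x : X) : set X :=
  [set y | o x y].

Definition loose (T : topologicalType) (G : T -> T -> Prop) (A : set T) : Prop :=
  forall x : T, exists O : set T, open O /\ O x /\
    (forall y, O y -> A y -> ~ G x y).

Definition coloring_number_le_aleph0 (X : Type) (G : X -> X -> Prop) : Prop :=
  exists o : X -> X -> Prop, orientation G o /\
    forall x, finite_set (outflow o x).

Definition loose_number_le_aleph0 (T : topologicalType) (G : T -> T -> Prop) : Prop :=
  exists C : set (set T), countable C /\ (forall A, C A -> loose G A) /\
    (forall x, exists A, C A /\ A x).

Definition chromatic_number_le_aleph0 (X : Type) (G : X -> X -> Prop) : Prop :=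
  exists C : set (set X), countable C /\ (forall A, C A -> anticlique G A) /\
    (forall x, exists A, C A /\ A x).

(* Main.v *)
Require Import Defs.
From HB Require Import structures.
From mathcomp Require Import all_boot all_order all_algebra.
From mathcomp Require Import all_classical all_reals all_analysis.
From mathcomp Require Import lra.
Set Implicit Arguments. Unset Strict Implicit.
Import Order.TTheory GRing.Theory Num.Theory.
Local Open Scope classical_set_scope.
Local Open Scope ring_scope.

Lemma archi_aux (R : realType) (e : R) : 0 < e -> exists n : nat, n.+1%:R^-1 < e.
Proof.
move=> e0; have := near_infty_natSinv_lt (PosNum e0) => -[N _ HN].
by exists N; apply: HN => /=.
Qed.

Lemma nbhs_open_aux (T : topologicalType) (x : T) P :
  nbhs x P -> exists O, open O /\ O x /\ O `<=` P.
Proof. by rewrite nbhsE => -[B [oB Bx] BP]; exists B. Qed.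

Lemma dense_aux (R : realType) (X : pseudoMetricType R) (D : set X) (x : X) r :
  dense D -> 0 < r -> exists d, D d /\ ball d r x.
Proof.
move=> dD r0; have [U [oU [Ux UB]]] := nbhs_open_aux (nbhsx_ballx x r r0).
have [d [Ud Dd]] := dD U (ex_intro _ x Ux) oU.
by exists d; split => //; apply: ball_sym; apply: UB.
Qed.

Definition rr (R : realType) (n : nat) : R := n.+1%:R^-1.

Lemma rr_gt0 (R : realType) n : 0 < rr R n.
Proof. by rewrite /rr invr_gt0 ltr0n. Qed.

Lemma part2 (R : realType) (X : completePseudoMetricType R)
  (D : set X) (cD : countable D) (dD : dense D) (G : X -> X -> Prop) :
  loose_number_le_aleph0 G -> chromatic_number_le_aleph0 G.
Proof.
move=> [C [cC [lC covC]]].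
pose Acl (t : (set X * X) * nat) := [set x | t.1.1 x /\ ball t.1.2 (rr R t.2) x /\
   forall y, ball t.1.2 (rr R t.2) y -> t.1.1 y -> ~ G x y].
exists (Acl @` ((C `*` D) `*` [set: nat])); split; [|split].
- apply: card_le_trans (card_image_le _ _) _.
  by apply: countableX; [apply: countableX|apply: countableP].
- move=> _ [[[A d] n] _ <-] x y [_ [_ Hx]] [Ay [By _]] _.
  exact: Hx.
- move=> x; have [A [CA Ax]] := covC x.
  have [U [oU [Ux HU]]] := lC A CA x.
  have [e e0 BU] : nbhs_ball x U by apply/nbhs_ballP; apply: open_nbhs_nbhs.
  have [n Hn] := archi_aux (divr_gt0 e0 (ltr0n R 2)).
  have [d [Dd Bdx]] := dense_aux x dD (rr_gt0 R n).
  exists (Acl ((A, d), n)); split; first by exists ((A, d), n).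
  split => //; split => // y Bdy Ay; apply: HU => //; apply: BU.
  have := ball_triangle (ball_sym Bdx) Bdy; apply: le_ball.
  rewrite /rr in Hn *; move: Hn; set t := (n.+1%:R^-1); move=> Hn. by rewrite [e](splitr e); apply: ltW; apply: ltrD.
Qed.

Lemma six_aux (R : realType) (t e : R) : t < e / 6%:R -> t + (t + t) + (t + t) + t <= e.
Proof. move=> h; lra. Qed.

Lemma part1 (R : realType) (X : completePseudoMetricType R)
  (D : set X) (cD : countable D) (dD : dense D) (hX : hausdorff_space X)
  (G : X -> X -> Prop) (hG : is_graph G) :
  coloring_number_le_aleph0 G -> loose_number_le_aleph0 G.
Proof.
move=> [ot [[oas oG] fin]].
have noo : forall z, ~ ot z z by move=> z ozz; case: hG => _ irr; apply: (irr z); apply/oG; left.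
have clF : forall z, closed (outflow ot z).
  move=> z; move: (fin z); apply: (proj1 (@accessible_finite_set_closed X)).
  exact: hausdorff_accessible.
have rr2 : forall n, rr R n <= rr R n + rr R n.
  by move=> n; rewrite lerDl; apply: ltW; apply: rr_gt0.
pose P (t : (X * nat) * set X) := [set y | ball t.1.1 (rr R t.1.2) y /\
  (forall f, ot y f -> exists2 e, t.2 e & ball e (rr R t.1.2) f) /\
  (forall e, t.2 e -> forall w, ball t.1.1 (rr R t.1.2 + rr R t.1.2) w ->
     ~ ball e (rr R t.1.2 + rr R t.1.2) w)].
exists (P @` ((D `*` [set: nat]) `*` [set S | S `<=` D /\ finite_set S]));
  split; [|split].
- apply: card_le_trans (card_image_le _ _) _.
  apply: countableX; last exact: countable_finite_subset.
  by apply: countableX => //; apply: countableP.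
- move=> _ [[[d n] S] _ <-] z.
  have [U [oU [Uz UB]]] := nbhs_open_aux (nbhsx_ballx z (rr R n) (rr_gt0 R n)).
  exists (~` outflow ot z `&` U); split; [apply: openI => //; rewrite openC //|split].
    by split => //; apply: noo.
  move=> y [Ny Uy] [Bdy [Hcov Hdisj]] Gzy.
  case/oG: Gzy => [ozy|oyz]; first exact: Ny.
  have [e Se Bez] := Hcov z oyz.
  apply: (Hdisj e Se z).
    exact: ball_triangle Bdy (ball_sym (UB y Uy)).
  exact: le_ball (rr2 n) _ Bez.
- move=> y.
  have : nbhs y (~` outflow ot y) by apply: open_nbhs_nbhs; split; [rewrite openC|apply: noo].
  move=> /nbhs_ballP [e e0 BF].
  have [n Hn] := archi_aux (divr_gt0 e0 (ltr0n R 6)).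
  have Hc : forall f, exists d1, D d1 /\ ball d1 (rr R n) f.
    by move=> f; have [d1 [H1 H2]] := dense_aux f dD (rr_gt0 R n); exists d1.
  have [h hh] := choice Hc.
  have [d [Dd Bdy]] := dense_aux y dD (rr_gt0 R n).
  exists (P ((d, n), h @` outflow ot y)); split.
    exists ((d, n), h @` outflow ot y) => //; split; first by split.
    split; last exact: finite_image.
    by move=> _ [f _ <-]; exact: (hh f).1.
  split => //; split.
    by move=> f oyf; exists (h f); [exists f | exact: (hh f).2].
  move=> _ [f Ff <-] w Bdw Bhw; apply: (BF f) Ff => /=.
  have := ball_triangle (ball_triangle (ball_triangle (ball_sym Bdy) Bdw) (ball_sym Bhw)) (hh f).2.
  by apply: le_ball; apply: six_aux.
Qed.

Unset Implicit Arguments.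
Theorem theorem3p4 (R : realType) (X : completePseudoMetricType R)
  (hX : polish X) (G : X -> X -> Prop) (hG : is_graph G) :
  (coloring_number_le_aleph0 G -> loose_number_le_aleph0 G) /\
  (loose_number_le_aleph0 G -> chromatic_number_le_aleph0 G).
Proof.
case: hX => hH [D [cD dD]]; split.
- exact: (@part1 R X D cD dD hH G hG).
- exact: (@part2 R X D cD dD G).
Qed.
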